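(* Let $n\ge 1$ and let $\overrightarrow{K_{1,n}}$ be an orientation of the star $K_{1,n}$ in which exactly $t$ of the $n$ leaves are sources, $0\le t\le n$. Then $\overrightarrow{K_{1,n}}$ is $\{1\}$-antimagic if and only if either $n=1$, or $n=2$ and $t=1$.
   Context: An oriented graph $\overrightarrow{G}$ is a directed graph obtained from a simple undirected graph by giving each edge one direction. For vertices $u,v$, $d(u,v)$ is the length of a shortest directed path from $u$ to $v$ ($d(u,u)=0$, and $d(u,v)=\infty$ if there is no such path). Let $\partial=\max\{d(u,v)<\infty : u,v\in V(\overrightarrow{G})\}$. A distance set is a nonempty $D\subseteq\{0,1,\dots,\partial\}$. The $D$-neighborhood of $u$ is $N_D(u)=\{v\in V(\overrightarrow{G}) : d(u,v)\in D\}$. For a bijection $f:V(\overrightarrow{G})\to\{1,\dots,|V(\overrightarrow{G})|\}$, the $D$-weight of $u$ is $\omega_D(u)=\sum_{v\in N_D(u)} f(v)$ (empty sum $=0$). $\overrightarrow{G}$ is $D$-antimagic if $D\subseteq\{0,\dots,\partial\}$ and there is such a bijection $f$ with all $D$-weights pairwise distinct. In an oriented star $\overrightarrow{K_{1,n}}$ the center is the vertex of degree $n$ and the leaves are the vertices of degree $1$; a leaf is a source if its arc points toward the center, and a sink otherwise. *)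

(* Defs.v *)
From mathcomp Require Import all_boot all_order.
Set Implicit Arguments. Unset Strict Implicit. Unset Printing Implicit Defensive.

Section OrientedGraphs.
Variable T : finType.

Definition oriented (a : rel T) : Prop :=
  irreflexive a /\ forall u v, a u v -> ~~ a v u.

Fixpoint reach (a : rel T) (k : nat) (u v : T) : bool :=
  if k is k'.+1 then [exists w, a u w && reach a k' w v] else u == v.

(* d(u,v): length of a shortest directed path, None = infinity.
   A shortest walk is a path, hence has length < #|T|. *)
Definition dist (a : rel T) (u v : T) : option nat :=
  let k := find (fun k => reach a k u v) (iota 0 #|T|) in
  if k < #|T| then Some k else None.

Definition diam (a : rel T) : nat :=
  \max_(u : T) \max_(v : T) (if dist a u v is Some k then k else 0).

Definition nbhD (a : rel T) (D : seq nat) (u : T) : {set T} :=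
  [set v | if dist a u v is Some k then k \in D else false].

(* D-weight for the labelling f (labels f v + 1 in {1..|V|}) *)
Definition weightD (a : rel T) (D : seq nat) (f : T -> 'I_#|T|) (u : T) : nat :=
  \sum_(v in nbhD a D u) (f v).+1.

Definition D_antimagic (a : rel T) (D : seq nat) : Prop :=
  [/\ D != [::], all (fun k => k <= diam a) D &
      exists f : T -> 'I_#|T|, bijective f /\ injective (weightD a D f)].
End OrientedGraphs.

(* Oriented star on 'I_n.+1: center ord0, leaves 1..n; leaves in S are
   sources (arc leaf -> center), the others are sinks (arc center -> leaf). *)
Definition star_arc (n : nat) (S : {set 'I_n.+1}) : rel 'I_n.+1 :=
  fun u v => ((u != ord0) && (v == ord0) && (u \in S))
          || ((u == ord0) && (v != ord0) && (v \notin S)).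

(* Main.v *)
Require Import Defs.
From mathcomp Require Import all_boot all_order.

Lemma in_nbhD1 (T : finType) (a : rel T) u v :
  irreflexive a -> 1 < #|T| -> (v \in nbhD a [::1] u) = a u v.
Proof.
move=> irr hT; rewrite /nbhD inE /dist.
case E: #|T| hT => [|[|m]] // _ /=.
case: eqP => [->|neq]; first by rewrite irr.
have -> : [exists w, a u w && (w == v)] = a u v.
  by apply/existsP/idP => [[w /andP[h /eqP <-]] //|h]; exists v; rewrite h eqxx.
by case: (a u v) => //; case: ifP.
Qed.

Lemma dist1 (T : finType) (a : rel T) u v :
  irreflexive a -> 1 < #|T| -> a u v -> dist a u v = Some 1.
Proof.
move=> irr hT huv; rewrite /dist.
case E: #|T| hT => [|[|m]] // _ /=.
case: eqP => [eq|neq]; first by move: huv; rewrite eq irr.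
have -> : [exists w, a u w && (w == v)] = a u v.
  by apply/existsP/idP => [[w /andP[h /eqP <-]] //|h]; exists v; rewrite h eqxx.
by rewrite huv.
Qed.

Lemma arc_irr n (S : {set 'I_n.+1}) : irreflexive (star_arc S).
Proof. by move=> u; rewrite /star_arc; case: (u == ord0); rewrite ?andbF. Qed.

Lemma nbh_star n (S : {set 'I_n.+1}) u v : 0 < n ->
  (v \in nbhD (star_arc S) [::1] u) = star_arc S u v.
Proof. by move=> hn; rewrite in_nbhD1 //; [exact: arc_irr | rewrite card_ord]. Qed.

Lemma nbh_center n (S : {set 'I_n.+1}) : 0 < n -> ord0 \notin S ->
  nbhD (star_arc S) [::1] ord0 = [set v | (v != ord0) && (v \notin S)].
Proof.
move=> hn h0; apply/setP => v; rewrite nbh_star // inE /star_arc eqxx /=.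
by [].
Qed.

Lemma nbh_src n (S : {set 'I_n.+1}) u : 0 < n -> u != ord0 -> u \in S ->
  nbhD (star_arc S) [::1] u = [set ord0].
Proof.
move=> hn hu hS; apply/setP => v; rewrite nbh_star // inE /star_arc hu hS /=.
by rewrite (negbTE hu) andbT orbF.
Qed.

Lemma nbh_snk n (S : {set 'I_n.+1}) u : 0 < n -> u != ord0 -> u \notin S ->
  nbhD (star_arc S) [::1] u = set0.
Proof.
move=> hn hu hS; apply/setP => v; rewrite nbh_star // inE /star_arc hu /=.
by rewrite (negbTE hu) (negbTE hS) andbF.
Qed.

Lemma w_set0 (T : finType) (a : rel T) D f u :
  nbhD a D u = set0 -> weightD a D f u = 0.
Proof. by move=> H; rewrite /weightD H big_set0. Qed.

Lemma w_set1 (T : finType) (a : rel T) D f u x :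
  nbhD a D u = [set x] -> weightD a D f u = (f x).+1.
Proof. by move=> H; rewrite /weightD H big_set1. Qed.

Lemma same_type n (S : {set 'I_n.+1}) (f : 'I_n.+1 -> 'I_#|'I_n.+1|) :
  0 < n -> injective (weightD (star_arc S) [::1] f) ->
  forall i j, i != ord0 -> j != ord0 -> (i \in S) = (j \in S) -> i = j.
Proof.
move=> hn inj i j hi hj hij; apply: inj; rewrite /weightD.
case: (boolP (i \in S)) => hiS.
  by rewrite nbh_src // nbh_src // -hij.
by rewrite nbh_snk // nbh_snk // -hij.
Qed.

Lemma diam_ok n (S : {set 'I_n.+1}) : 0 < n -> 1 <= diam (star_arc S).
Proof.
move=> hn.
pose l : 'I_n.+1 := @Ordinal n.+1 1 hn.
have hl : l != ord0 by [].
have [u [v huv]] : exists u v, star_arc S u v.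
  case: (boolP (l \in S)) => hS.
    by exists l, ord0; rewrite /star_arc hl hS.
  by exists ord0, l; rewrite /star_arc hl hS.
apply: (leq_trans _ (leq_bigmax u)).
apply: (leq_trans _ (leq_bigmax v)).
by rewrite (@dist1 _ _ u v (@arc_irr n S)) // card_ord.
Qed.

Lemma f_bij (T : finType) : bijective (@enum_rank T).
Proof. exact: (Bijective (@enum_rankK T) (@enum_valK T)). Qed.

Lemma rev2 (S : {set 'I_3}) (l k : 'I_3) : l != ord0 -> k != ord0 -> l != k ->
  (forall u, u = ord0 \/ u = l \/ u = k) -> S = [set l] ->
  D_antimagic (star_arc S) [::1].
Proof.
move=> hl hk hlk cov ->.
have E1 := negbTE hl; have E2 := negbTE hk; have E3 := negbTE hlk.
have E1' : (ord0 == l) = false by rewrite eq_sym.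
have E2' : (ord0 == k) = false by rewrite eq_sym.
have E3' : (k == l) = false by rewrite eq_sym.
split => //; first by rewrite /= andbT diam_ok.
exists (@enum_rank _); split; first exact: f_bij.
have Wc : weightD (star_arc [set l]) [::1] (@enum_rank _) ord0 = (enum_rank k).+1.
  apply: w_set1; rewrite nbh_center // ?in_set1 ?E1' //.
  by apply/setP => v; rewrite !inE; case: (cov v) => [->|[->|->]]; rewrite ?eqxx ?E1 ?E2 ?E3 ?E1' ?E2' ?E3'.
have Wl : weightD (star_arc [set l]) [::1] (@enum_rank _) l = (enum_rank (ord0 : 'I_3)).+1.
  by apply: w_set1; rewrite nbh_src // in_set1 eqxx.
have Wk : weightD (star_arc [set l]) [::1] (@enum_rank _) k = 0.
  by apply: w_set0; rewrite nbh_snk // in_set1 E3'.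
move=> u v; case: (cov u) => [->|[->|->]]; case: (cov v) => [->|[->|->]] //;
  rewrite ?Wc ?Wl ?Wk // => -[] h; have h' := enum_rank_inj (val_inj h);
  by move: hk; rewrite h' eqxx.
Qed.

Theorem mainTheorem1 (n t : nat) (S : {set 'I_n.+1}) :
  1 <= n -> ord0 \notin S -> #|S| = t ->
  (D_antimagic (star_arc S) [:: 1] <-> n = 1 \/ (n = 2 /\ t = 1)).
Proof.
case: n S => [|[|[|n]]] S Hn H0 Ht //.
- split => [_|_]; first by left.
  pose l : 'I_2 := @Ordinal 2 1 isT.
  have cov : forall u : 'I_2, u = ord0 \/ u = l.
    by case=> [[|[|k]] Hk] //; [left|right]; exact/val_inj.
  have hl0 : l != ord0 by [].
  split => //; first by rewrite /= andbT diam_ok.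
  exists (@enum_rank _); split; first exact: f_bij.
  case: (boolP (l \in S)) => hS.
    have Wc : weightD (star_arc S) [::1] (@enum_rank _) ord0 = 0.
      apply: w_set0; rewrite nbh_center //.
      by apply/setP => v; rewrite inE in_set0; case: (cov v) => ->; rewrite ?eqxx ?hS.
    have Wl : weightD (star_arc S) [::1] (@enum_rank _) l = (enum_rank (ord0 : 'I_2)).+1.
      by apply: w_set1; rewrite nbh_src.
    by move=> u v; case: (cov u) => ->; case: (cov v) => -> //; rewrite Wc Wl.
  have Wc : weightD (star_arc S) [::1] (@enum_rank _) ord0 = (enum_rank l).+1.
    apply: w_set1; rewrite nbh_center //.
    by apply/setP => v; rewrite !inE; case: (cov v) => ->; rewrite ?eqxx ?hS.
  have Wl : weightD (star_arc S) [::1] (@enum_rank _) l = 0.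
    by apply: w_set0; rewrite nbh_snk.
  by move=> u v; case: (cov u) => ->; case: (cov v) => -> //; rewrite Wc Wl.
- pose l1 : 'I_3 := @Ordinal 3 1 isT.
  pose l2 : 'I_3 := @Ordinal 3 2 isT.
  have cov : forall u : 'I_3, u = ord0 \/ u = l1 \/ u = l2.
    by case=> [[|[|[|k]]] Hk] //; [left|right;left|right;right]; exact/val_inj.
  split.
    move=> [_ _ [f [_ inj]]]; right; split => //.
    have st := @same_type 2 S f isT inj.
    have hne : (l1 \in S) != (l2 \in S).
      by apply/negP => /eqP h; have := st l1 l2 isT isT h => /(congr1 val).
    rewrite -Ht -sum1_card big_mkcond /= !big_ord_recl big_ord0 /=.
    have -> : lift ord0 ord0 = l1 by apply/val_inj.
    have -> : lift ord0 (lift ord0 ord0) = l2 by apply/val_inj.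
    by rewrite (negbTE H0); case: (l1 \in S) (l2 \in S) hne => [] [].
  case=> [//|[_ t1]].
  have /cards1P [l hSl] : #|S| == 1 by rewrite Ht t1.
  have hl : l != ord0 by apply: contra H0; rewrite hSl in_set1 => /eqP ->.
  case: (cov l) => [e|[e|e]]; rewrite e in hl hSl; first by rewrite eqxx in hl.
    by apply: (@rev2 S l1 l2).
  by apply: (@rev2 S l2 l1) => // u; case: (cov u) => [|[|]]; auto.
- split; last by case=> [//|[//]].
  move=> [_ _ [f [_ inj]]].
  have st := @same_type n.+3 S f isT inj.
  pose a : 'I_n.+4 := @Ordinal n.+4 1 isT.
  pose b : 'I_n.+4 := @Ordinal n.+4 2 isT.
  pose c : 'I_n.+4 := @Ordinal n.+4 3 isT.
  have : [|| (a \in S) == (b \in S), (a \in S) == (c \in S) | (b \in S) == (c \in S)].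
    by case: (a \in S); case: (b \in S); case: (c \in S).
  case/or3P => /eqP h;
    [move: (st a b isT isT h)|move: (st a c isT isT h)|move: (st b c isT isT h)];
    by move/(congr1 val).
Qed.
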